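(* Let $G$ be a finite simple graph, and let $V_0 \subseteq V(G)$ be reducible using $\mathcal{S}$ and $X$. Let $G' = (G - X) - V_0$. If $\tau(G') \leq 2\nu(G')$, then $\tau(G) \leq 2\nu(G)$.
   Context: $\nu(G)$ is the maximum number of pairwise edge-disjoint triangles in $G$; $\tau(G)$ is the minimum size of an edge set $Y$ with $G-Y$ triangle-free. For a set $\mathcal{S}$ of triangles, an $\mathcal{S}$-edge is an edge of some triangle in $\mathcal{S}$. A nonempty set $V_0 \subseteq V(G)$ is reducible using $\mathcal{S}$ and $X$, where $\mathcal{S}$ is a set of pairwise edge-disjoint triangles of $G$ and $X \subseteq E(G)$, if (i) $|X| \leq 2|\mathcal{S}|$; (ii) $G - X$ has no triangle containing a vertex of $V_0$; and (iii) $X$ contains every $\mathcal{S}$-edge whose endpoints both lie outside $V_0$. *)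

(* Defs.v *)
(* A finite simple graph on vertex type T : finType is given
   by its edge set E : {set {set T}}, every edge being a 2-element subset. *)
From mathcomp Require Import all_boot.
Set Implicit Arguments. Unset Strict Implicit. Unset Printing Implicit Defensive.

Section Triangles.
Variable T : finType.
Implicit Types (E Y X S : {set {set T}}) (t : {set T}).

Definition simple_graph E : Prop := forall e, e \in E -> #|e| = 2.

Definition triangle E t : bool :=
  (#|t| == 3) && [forall x in t, forall y in t, (x != y) ==> ([set x; y] \in E)].

Definition tri_edges t : {set {set T}} := [set e in powerset t | #|e| == 2].

Definition tri_packing E S : Prop :=
  (forall t, t \in S -> triangle E t) /\
  (forall t1 t2, t1 \in S -> t2 \in S -> t1 != t2 ->
     tri_edges t1 :&: tri_edges t2 = set0).

Definition tri_packingb E S : bool :=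
  [forall t in S, triangle E t] &&
  [forall t1 in S, forall t2 in S,
     (t1 != t2) ==> (tri_edges t1 :&: tri_edges t2 == set0)].

Definition nu E : nat := \max_(S : {set {set T}} | tri_packingb E S) #|S|.

Definition triangle_free E : bool := [forall t : {set T}, ~~ triangle E t].

Definition tau E : nat :=
  \big[minn/#|E|]_(Y : {set {set T}} | (Y \subset E) && triangle_free (E :\: Y)) #|Y|.

Definition del_edges E X : {set {set T}} := E :\: X.

(* G - V0 : delete the vertices of V0 (together with all incident edges);
   the vertex set is implicit, remaining isolated vertices are irrelevant *)
Definition del_vertices E (V0 : {set T}) : {set {set T}} := [set e in E | [disjoint e & V0]].

Definition S_edges S : {set {set T}} := \bigcup_(t in S) tri_edges t.

Definition reducible E (V0 : {set T}) S X : Prop :=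
  V0 != set0 /\
  tri_packing E S /\
  X \subset E /\
  #|X| <= 2 * #|S| /\
  (forall t, triangle (E :\: X) t -> [disjoint t & V0]) /\
  (forall e, e \in S_edges S -> [disjoint e & V0] -> e \in X).

End Triangles.

(* Main.v *)
Require Import Defs.
From mathcomp Require Import all_boot.
From mathcomp Require Import zify.
Set Implicit Arguments. Unset Strict Implicit.

Section H.
Variable T : finType.

Lemma tri_edges_pair (t e : {set T}) : e \in tri_edges t ->
  exists x y, [/\ x \in t, y \in t, x != y & e = [set x; y]].
Proof.
rewrite inE powersetE => /andP[sub /cards2P [x [y [xy ee]]]].
exists x, y; split => //; apply: (subsetP sub); rewrite ee !inE eqxx ?orbT //.
Qed.

Lemma triangle_pt (E1 E2 : {set {set T}}) t : triangle E1 t ->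
  (forall x y, x \in t -> y \in t -> x != y -> [set x; y] \in E1 -> [set x; y] \in E2) ->
  triangle E2 t.
Proof.
move=> /andP[c /forallP H] K; apply/andP; split => //.
apply/forallP=> x; apply/implyP=> xt; apply/forallP=> y; apply/implyP=> yt; apply/implyP=> xy.
have:= H x; rewrite xt /= => /forallP/(_ y); rewrite yt xy /= => h.
exact: K.
Qed.

Lemma triangle_mono (E1 E2 : {set {set T}}) t : E1 \subset E2 -> triangle E1 t -> triangle E2 t.
Proof. move=> s h; apply: (triangle_pt h) => x y _ _ _; exact: (subsetP s). Qed.

Lemma triangle_edge (E : {set {set T}}) t e : triangle E t -> e \in tri_edges t -> e \in E.
Proof.
move=> /andP[_ /forallP H] /tri_edges_pair [x [y [xt yt xy ->]]].
have:= H x; rewrite xt /= => /forallP/(_ y); rewrite yt xy //.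
Qed.

Lemma triangle_has_edge (E : {set {set T}}) t : triangle E t -> tri_edges t != set0.
Proof.
move=> /andP[/eqP c _].
have : 1 < #|t| by rewrite c.
move/card_gt1P => [x [y [xt yt xy]]].
apply/set0Pn; exists [set x; y]; rewrite inE powersetE cards2 xy eqxx andbT.
apply/subsetP=> z; rewrite !inE => /orP[]/eqP->//.
Qed.

Lemma set0_tfree : triangle_free (set0 : {set {set T}}).
Proof.
apply/forallP=> t; apply/negP=> h.
have /set0Pn [e ee] := triangle_has_edge h.
by have := triangle_edge h ee; rewrite inE.
Qed.
End H.

Lemma bigmin_le (I : finType) (P : pred I) (F : I -> nat) x j :
  P j -> \big[minn/x]_(i | P i) F i <= F j.
Proof.
move=> Pj; rewrite -big_filter.
have : j \in [seq i <- index_enum I | P i] by rewrite mem_filter Pj mem_index_enum.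
elim: [seq i <- index_enum I | P i] => [|a s IH] //=.
rewrite big_cons inE => /orP[/eqP->|/IH h]; first exact: geq_minl.
exact: leq_trans (geq_minr _ _) h.
Qed.

Theorem lemma2p2 (T : finType) (E : {set {set T}}) (V0 : {set T})
    (S X : {set {set T}}) :
  simple_graph E ->
  reducible E V0 S X ->
  let G' := del_vertices (del_edges E X) V0 in
  tau G' <= 2 * nu G' ->
  tau E <= 2 * nu E.
Proof.
move=> _ [V0n [[Str Sdis] [XE [Xcard [HV HSX]]]]] G' Htau.
have GE : G' \subset E.
  apply/subsetP=> e; rewrite /G' /del_vertices /del_edges !inE => /andP[/andP[_ ->]]//.
have [Y' [vY' cY']] : exists Y' : {set {set T}}, ((Y' \subset G') && triangle_free (G' :\: Y')) /\ #|Y'| = tau G'.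
  rewrite /tau; apply: (big_ind (fun m => exists Y' : {set {set T}}, ((Y' \subset G') && triangle_free (G' :\: Y')) /\ #|Y'| = m)).
  - by exists G'; rewrite subxx setDv set0_tfree.
  - move=> a b [Ya [va ca]] [Yb [vb cb]]; rewrite /minn; case: ifP => _.
    + by exists Ya. + by exists Yb.
  - by move=> Y vY; exists Y.
have [P [vP cP]] : exists P : {set {set T}}, tri_packingb G' P /\ #|P| = nu G'.
  rewrite /nu; apply: (big_ind (fun m => exists P : {set {set T}}, tri_packingb G' P /\ #|P| = m)).
  - exists set0; rewrite cards0; split => //; apply/andP; split; apply/forallP=> t; rewrite inE //.
  - move=> a b [Ya [va ca]] [Yb [vb cb]]; rewrite /maxn; case: ifP => _.
    + by exists Yb. + by exists Ya.
  - by move=> Y vY; exists Y.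
have vY : ((Y' :|: X) \subset E) && triangle_free (E :\: (Y' :|: X)).
  move/andP: vY' => [sY tfY]; apply/andP; split.
    by rewrite subUset XE andbT (subset_trans sY GE).
  apply/forallP=> t; apply/negP=> tt.
  have tX : triangle (E :\: X) t.
    apply: (triangle_mono _ tt); apply: setDS; exact: subsetUr.
  have dt := HV t tX.
  have tt' : triangle (G' :\: Y') t.
    apply: (triangle_pt tt) => x y xt yt xy.
    rewrite /G' /del_vertices /del_edges !inE => /andP[/norP[nY nX] eE].
    rewrite nY nX eE /=.
    apply: disjointWl dt; apply/subsetP=> z; rewrite !inE => /orP[]/eqP->//.
  by move/forallP: tfY => /(_ t); rewrite tt'.
have tauE : tau E <= #|Y' :|: X|.
  by rewrite /tau; apply: (@bigmin_le _ (fun Y : {set {set T}} => (Y \subset E) && triangle_free (E :\: Y)) (fun Y => #|Y|)).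
move/andP: vP => [/forallP Ptr /forallP Pdis].
have mixed : forall t1 t2, t1 \in P -> t2 \in S -> tri_edges t1 :&: tri_edges t2 = set0.
  move=> t1 t2 t1P t2S; apply/setP=> e; rewrite in_setI in_set0; apply/negP=> /andP[e1 e2].
  have := Ptr t1; rewrite t1P /= => tr1.
  have := triangle_edge tr1 e1; rewrite /G' /del_vertices /del_edges !inE => /andP[/andP[nX _] dj].
  have : e \in X by apply: HSX => //; apply/bigcupP; exists t2.
  by rewrite (negbTE nX).
have PS : P :&: S = set0.
  apply/setP=> t; rewrite !inE; apply/negP=> /andP[tP tS].
  have := mixed t t tP tS; rewrite setIid => h.
  have := Ptr t; rewrite tP /= => tr.
  by have := triangle_has_edge tr; rewrite h eqxx.
have vPS : tri_packingb E (P :|: S).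
  apply/andP; split.
    apply/forallP=> t; apply/implyP; rewrite inE => /orP[tP|tS].
      have := Ptr t; rewrite tP /= => tr; exact: triangle_mono GE tr.
    exact: Str.
  apply/forallP=> t1; apply/implyP; rewrite inE => /orP[t1P|t1S];
  apply/forallP=> t2; apply/implyP; rewrite inE => /orP[t2P|t2S]; apply/implyP=> ne.
  - by have := Pdis t1; rewrite t1P /= => /forallP/(_ t2); rewrite t2P ne.
  - by rewrite mixed.
  - by rewrite setIC mixed.
  - by rewrite Sdis.
have nuE : #|P :|: S| <= nu E.
  by rewrite /nu (bigD1 (P :|: S)) //=; exact: leq_maxl.
have cU : #|Y' :|: X| <= #|Y'| + #|X| by rewrite cardsU leq_subr.
have cPS : #|P :|: S| = #|P| + #|S| by rewrite cardsU PS cards0 subn0.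
lia.
Qed.
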